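(* Let $\sigma$ be a permutation, $f\in\mathbb Z_{\ge1}$ a colour and $\iota\in[|\sigma|+1]$. Then $$\mathbb C(\sigma^{*\iota})(|\sigma|+1)=f\iff z_\sigma(f)\le\iota<z_\sigma(f-1).$$
   Context: The RITMO colouring $\mathbb C(\sigma):[|\sigma|]\to\mathbb Z_{\ge1}$ of a permutation $\sigma$ processes indices in decreasing order of value, giving each index $i$ the smallest positive integer $c$ such that no already coloured index $j<i$ has colour $c$ (equivalently: colour 1 on left-to-right maxima, colour 2 on the left-to-right maxima of the remaining entries, etc.). For $\sigma\in\mathcal S_m$ and $\iota\in[m+1]$, $\sigma^{*\iota}$ is the permutation of $[m+1]$ with entries in the same relative order as $\sigma(1),\dots,\sigma(m),\iota-1/2$. For a colour $f\ge1$: if some index of $\sigma$ has colour $f$ under $\mathbb C(\sigma)$, let $p$ be the largest such index and set $z_\sigma(f)=\sigma(p)+1$; otherwise $z_\sigma(f)=1$. By convention $z_\sigma(0)=|\sigma|+2$. *)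

(* Defs.v *)
From mathcomp Require Import all_boot all_order all_fingroup.
Set Implicit Arguments. Unset Strict Implicit. Unset Printing Implicit Defensive.

(* A permutation is encoded as its one-line notation: a sequence of values.
   Values are 1-based (a permutation of [m] = {1..m}); positions in the
   sequence are 0-based (paper's index k corresponds to position k-1). *)

Definition perm_seq (m : nat) (s : 'S_m) : seq nat :=
  [seq (s i).+1 | i <- enum 'I_m].

(* sigma^{*iota}: entries in the same relative order as
   sigma(1),...,sigma(m), iota - 1/2.  Entries v >= iota get shifted up,
   the new last entry gets value iota. *)
Definition ins_perm (s : seq nat) (iota : nat) : seq nat :=
  rcons [seq if iota <= v then v.+1 else v | v <- s] iota.

(* One step of the RITMO colouring: colour the position i holding value v
   with the smallest c >= 1 such that no already coloured position j < i
   has colour c.  (col j = 0 means "not yet coloured".) *)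
Definition ritmo_step (s : seq nat) (col : nat -> nat) (v : nat) : nat -> nat :=
  let i := index v s in
  let c := (find (fun c => all (fun j => col j != c) (iota 0 i))
                 (iota 1 (size s).+1)).+1 in
  fun j => if j == i then c else col j.

Definition ritmo (s : seq nat) : nat -> nat :=
  foldl (ritmo_step s) (fun _ => 0) (rev (iota 1 (size s))).

Definition zfun (s : seq nat) (f : nat) : nat :=
  if f == 0 then (size s).+2 else
  let ps := [seq j <- iota 0 (size s) | ritmo s j == f] in
  if ps is [::] then 1 else (nth 0 s (last 0 ps)).+1.

(* Main.v *)
Require Import Defs.
From mathcomp Require Import all_boot all_order all_fingroup zify.
Set Implicit Arguments. Unset Strict Implicit.

Definition spec (s : seq nat) (C : nat -> nat) (j : nat) :=
  (forall j', j' < j -> nth 0 s j < nth 0 s j' -> C j' != C j) /\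
  (forall c, 0 < c < C j -> exists j', j' < j /\ nth 0 s j < nth 0 s j' /\ C j' = c).

Definition isperm (s : seq nat) := uniq s /\ forall v, (v \in s) = (0 < v <= size s).

Definition Inv s t (D : nat -> nat) :=
  (forall j, (D j != 0) = (t < nth 0 s j)) /\ forall j, t < nth 0 s j -> spec s D j.

Lemma inv_step s t D : isperm s -> 0 < t <= size s -> Inv s t D ->
  Inv s t.-1 (ritmo_step s D t).
Proof.
move=> [us vs] tb [I1 I2].
have ts : t \in s by rewrite vs.
set i := index t s.
have ilt : i < size s by rewrite index_mem.
have si : nth 0 s i = t by apply: nth_index.
have uni : forall j, nth 0 s j = t -> j = i.
  move=> j Hj; case: (ltnP j (size s)) => hj.
    by rewrite /i -Hj index_uniq.
  by move: Hj; rewrite nth_default //; lia.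
set P := (fun c => all (fun j => D j != c) (iota 0 i)).
set l := iota 1 (size s).+1.
have hasP : has P l.
  apply/negPn/negP => /hasPn H.
  have sub : {subset l <= map D (iota 0 i)}.
    move=> c cl; have := H c cl; rewrite /P => /allPn [j jin /negPn /eqP Dj].
    by rewrite -Dj map_f.
  have := uniq_leq_size (iota_uniq 1 (size s).+1) sub.
  rewrite size_map !size_iota; lia.
set k := find P l.
have klt : k < size l by rewrite -has_find.
have Pk : P k.+1.
  have := nth_find 0 hasP; rewrite -/k /l nth_iota ?add1n //.
  by rewrite /l size_iota in klt.
have E : ritmo_step s D t = fun j => if j == i then k.+1 else D j by [].
rewrite E; split.
  move=> j /=; have [->|ne] := eqVneq j i.
    by rewrite si; apply/idP/idP => _; lia.
  have nt : nth 0 s j != t by apply/eqP => /uni ji; move: ne; rewrite ji eqxx.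
  by rewrite I1; apply/idP/idP; lia.
move=> j hj /=; have [->|ne] := eqVneq j i.
  rewrite /spec eqxx; split.
    move=> j' j'i lt.
    have -> : (j' == i) = false by apply/eqP; lia.
    by apply: (allP Pk); rewrite mem_iota; lia.
  move=> c /andP [c0 ck].
  have ck' : c.-1 < k by lia.
  have := before_find 0 ck'.
  rewrite /l nth_iota; last by rewrite /l size_iota in klt; lia.
  have -> : 1 + c.-1 = c by lia.
  move/negbT; rewrite /P => /allPn [j' j'in /negPn /eqP Dj'].
  move: j'in; rewrite mem_iota => /andP [_ j'lt].
  exists j'; split; first by lia.
  have -> : (j' == i) = false by apply/eqP; lia.
  split=> //.
  have : D j' != 0 by rewrite Dj'; lia.
  by rewrite I1 si.
have nt : nth 0 s j != t by apply/eqP => /uni ji; move: ne; rewrite ji eqxx.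
have hj' : t < nth 0 s j by lia.
have [sp1 sp2] := I2 j hj'.
have ji : (j == i) = false by apply/negbTE.
rewrite /spec ji; split.
  move=> j' j'j lt.
  have -> : (j' == i) = false by apply/eqP => ei; move: lt; rewrite ei si; lia.
  exact: sp1.
move=> c hc; have [j' [h1 [h2 h3]]] := sp2 c hc.
exists j'; split=> //; split=> //.
have -> : (j' == i) = false by apply/eqP => ei; move: h2; rewrite ei si; lia.
by [].
Qed.

Lemma perm_bound s : isperm s -> forall j, nth 0 s j <= size s.
Proof.
move=> [us vs] j; case: (ltnP j (size s)) => hj.
  by have := mem_nth 0 hj; rewrite vs => /andP [].
by rewrite nth_default.
Qed.

Lemma ritmo_inv s : isperm s -> Inv s 0 (ritmo s).
Proof.
move=> ps.
have key : forall k, k <= size s -> Inv s (size s - k)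
  (foldl (ritmo_step s) (fun _ => 0) (rev (iota (size s - k).+1 k))).
  elim=> [|k IH] hk.
    rewrite subn0 /=; split => j.
      by rewrite eqxx; apply/esym/negbTE; rewrite -leqNgt; exact: perm_bound.
    by have := perm_bound ps j; lia.
  have e : (size s - k.+1).+1 = size s - k by lia.
  rewrite e /= rev_cons foldl_rcons.
  have -> : size s - k.+1 = (size s - k).-1 by lia.
  apply: inv_step => //; first by lia.
  by apply: IH; lia.
have := key (size s) (leqnn _).
by rewrite subnn.
Qed.

Lemma spec_unique s u C D n :
  (forall j j', j < n -> j' < n ->
     (nth 0 s j < nth 0 s j') = (nth 0 u j < nth 0 u j')) ->
  (forall j, j < n -> 0 < C j /\ spec s C j) ->
  (forall j, j < n -> 0 < D j /\ spec u D j) ->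
  forall j, j < n -> C j = D j.
Proof.
move=> Hord HC HD; elim/ltn_ind => j IH hj.
have [c0 [c1 c2]] := HC j hj; have [d0 [d1 d2]] := HD j hj.
case: (ltngtP (C j) (D j)) => // h.
  have [j' [h1 [h2 h3]]] := d2 (C j) (ltac:(lia)).
  have j'n : j' < n by lia.
  have := c1 j' h1; rewrite Hord // => /(_ h2).
  by rewrite IH // h3 eqxx.
have [j' [h1 [h2 h3]]] := c2 (D j) (ltac:(lia)).
have j'n : j' < n by lia.
have := d1 j' h1; rewrite -Hord // => /(_ h2).
by rewrite -IH // h3 eqxx.
Qed.

Lemma ritmo_full s : isperm s -> forall j, j < size s ->
  0 < ritmo s j /\ spec s (ritmo s) j.
Proof.
move=> ps j hj; have [I1 I2] := ritmo_inv ps.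
have p0 : 0 < nth 0 s j.
  by have := mem_nth 0 hj; case: ps => _ ->; case/andP.
split; last exact: I2.
by have := I1 j; rewrite p0 lt0n.
Qed.

Lemma chain s : isperm s -> forall d j f, j < size s -> 0 < f ->
  ritmo s j = f + d ->
  exists k, k < size s /\ nth 0 s j <= nth 0 s k /\ ritmo s k = f.
Proof.
move=> ps; elim=> [|d IH] j f hj hf e.
  by exists j; rewrite e addn0.
have [_ [_ c2]] := ritmo_full ps hj.
have [j' [h1 [h2 h3]]] := c2 (f + d) (ltac:(lia)).
have [k [k1 [k2 k3]]] := IH j' f (ltac:(lia)) hf h3.
by exists k; split => //; split => //; lia.
Qed.

Lemma path_last_max a r : path leq a r -> forall x, x \in a :: r -> x <= last a r.
Proof.
elim: r a => [|b r IH] a /=.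
  by move=> _ x; rewrite inE => /eqP ->.
move=> /andP [ab pr] x; rewrite inE => /orP [/eqP ->|xr].
  have := IH b pr b (mem_head _ _); lia.
exact: IH b pr x xr.
Qed.

Lemma zlem s c x : isperm s -> 0 < c -> 0 < x ->
  (x < zfun s c <-> exists j, j < size s /\ x <= nth 0 s j /\ ritmo s j = c).
Proof.
move=> ps c0 x0; rewrite /zfun.
have -> : (c == 0) = false by case: c c0.
have psP : forall j, (j \in [seq j <- iota 0 (size s) | ritmo s j == c])
   = (j < size s) && (ritmo s j == c).
  by move=> j; rewrite mem_filter mem_iota andbC.
have srt : sorted leq [seq j <- iota 0 (size s) | ritmo s j == c].
  by apply: sorted_filter; [exact: leq_trans | exact: iota_sorted].
move: psP srt.
case: [seq j <- iota 0 (size s) | ritmo s j == c] => [|a r] psP srt.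
  split; first lia.
  move=> [j [hj [_ hc]]].
  by have := psP j; rewrite in_nil hj hc eqxx.
have pin : last a r \in a :: r by apply: mem_last.
move: (pin); rewrite psP => /andP [pn /eqP pc].
rewrite /=; split.
  by move=> h; exists (last a r); split => //; split => //; lia.
move=> [j [hj [hx hc]]].
have jin : j \in a :: r by rewrite psP hj hc eqxx.
have jp := path_last_max srt jin.
have [_ [c1 _]] := ritmo_full ps pn.
case: (ltnP (nth 0 s (last a r)) (nth 0 s j)) => h; last by lia.
case: (ltngtP j (last a r)) => hjp; [|lia|].
  by have := c1 j hjp h; rewrite hc pc eqxx.
by move: h; rewrite hjp ltnn.
Qed.

Lemma isperm_perm_seq m (sigma : 'S_m) : isperm (perm_seq sigma).
Proof.
have sz : size (perm_seq sigma) = m by rewrite size_map size_enum_ord.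
split.
  rewrite map_inj_uniq ?enum_uniq //.
  by move=> a b /= /succn_inj /ord_inj; apply: perm_inj.
move=> v; rewrite size_map size_enum_ord; apply/idP/idP.
  by move=> /mapP [i _ ->]; rewrite ltn_ord.
case: v => [|w] //= hw.
apply/mapP; exists (sigma^-1 (Ordinal hw))%g; first by rewrite mem_enum.
by rewrite permKV.
Qed.

Lemma isperm_ins s x : isperm s -> 0 < x <= (size s).+1 -> isperm (ins_perm s x).
Proof.
move=> [us vs] hx.
have sz : size (ins_perm s x) = (size s).+1 by rewrite size_rcons size_map.
split.
  rewrite rcons_uniq; apply/andP; split.
    apply/mapP => [[v vin]]; case: ifP => h; lia.
  rewrite map_inj_uniq //.
  by move=> a b /=; case: ifP; case: ifP; lia.
move=> v; rewrite sz mem_rcons inE; apply/idP/idP.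
  case/orP => [/eqP -> //|].
  move=> /mapP [w win ->]; move: win; rewrite vs.
  by case: ifP; lia.
move=> hv; case: (ltngtP v x) => h.
- apply/orP; right; apply/mapP; exists v; first by rewrite vs; lia.
  by case: ifP => //; lia.
- apply/orP; right; apply/mapP; exists v.-1; first by rewrite vs; lia.
  by case: ifP => //; lia.
- by apply/orP; left; apply/eqP.
Qed.

Theorem mainTheorem16 (m : nat) (sigma : 'S_m) (f iota : nat) :
  1 <= f -> 1 <= iota <= m.+1 ->
  (ritmo (ins_perm (perm_seq sigma) iota) m = f <->
   zfun (perm_seq sigma) f <= iota < zfun (perm_seq sigma) f.-1).
Proof.
move=> hf hi.
set s := perm_seq sigma.
have hs : isperm s by apply: isperm_perm_seq.
have sz : size s = m by rewrite /s /perm_seq size_map size_enum_ord.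
set s' := ins_perm s iota.
have hs' : isperm s' by apply: isperm_ins => //; rewrite sz.
have sz' : size s' = m.+1 by rewrite /s' /ins_perm size_rcons size_map sz.
set g := fun v => if iota <= v then v.+1 else v.
have ns'm : nth 0 s' m = iota.
  by rewrite /s' /ins_perm nth_rcons size_map sz ltnn eqxx.
have ns'j : forall j, j < m -> nth 0 s' j = g (nth 0 s j).
  by move=> j hj; rewrite /s' /ins_perm nth_rcons size_map sz hj (nth_map 0) // sz.
have Ceq : forall j, j < m -> ritmo s' j = ritmo s j.
  apply: (@spec_unique s' s _ _ m).
  - move=> j j' hj hj'; rewrite !ns'j // /g.
    by case: ifP; case: ifP => ? ?; apply/idP/idP; lia.
  - by move=> j hj; apply: ritmo_full => //; rewrite sz'; lia.
  - by move=> j hj; apply: ritmo_full => //; rewrite sz.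
have [g0 [b c]] := ritmo_full hs' (ltac:(rewrite sz'; lia) : m < size s').
pose A c := exists j, j < m /\ iota <= nth 0 s j /\ ritmo s j = c.
have notAg : ~ A (ritmo s' m).
  move=> [j [hj [hx hc]]].
  have := b j hj; rewrite ns'm ns'j // Ceq // hc eqxx /g.
  by case: ifP => ? H; [have := H (ltac:(lia)) | have := H]; lia.
have Ac : forall c, 0 < c < ritmo s' m -> A c.
  move=> c0 hc; have [j [h1 [h2 h3]]] := c c0 hc.
  exists j; split => //; split.
    by move: h2; rewrite ns'm ns'j // /g; case: ifP => ? ?; lia.
  by rewrite -Ceq.
have down : forall c c', 1 <= c' <= c -> A c -> A c'.
  move=> c0 c' hc [j [hj [hx hcj]]].
  have [k [k1 [k2 k3]]] := @chain s hs (c0 - c') j c' (ltac:(rewrite sz; lia) : j < size s)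
     (ltac:(lia) : 0 < c') (ltac:(rewrite hcj; lia)).
  by exists k; split; [rewrite -sz | split => //; lia].
have zA : forall c, 0 < c -> (iota < zfun s c <-> A c).
  move=> c0 hc; rewrite (@zlem s c0 iota hs hc) ?sz //; lia.
split.
  move=> e; apply/andP; split.
    rewrite leqNgt; apply/negP => /(zA f hf) h.
    by move: notAg; rewrite e.
  case: (ltngtP f 1) => hf1; first lia.
    apply/(zA f.-1 (ltac:(lia))).
    by apply: Ac; rewrite e; lia.
  by rewrite hf1 /zfun /= sz; lia.
move=> /andP [h1 h2].
have nAf : ~ A f by move/(zA f hf) => ?; lia.
case: (ltngtP (ritmo s' m) f) => h //.
  have f1 : 1 < f by lia.
  have Af1 : A f.-1 by apply/(zA f.-1 (ltac:(lia))).
  exfalso; exact: (notAg (down f.-1 (ritmo s' m) (ltac:(lia)) Af1)).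
by exfalso; apply: nAf; apply: Ac; rewrite hf h.
Qed.
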